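(* Let $G$ be a non-discrete compact group with normalized Haar measure $\nu$. For every neighborhood $U$ of the identity there exists a finite set $H\subseteq G$ such that (1) $HU=G$, and (2) for every $I\subseteq H$, $\nu(IU)\ge \frac{|I|}{|H|}$. *)

(* Defs.v *)
From HB Require Import structures.
From mathcomp Require Import all_boot all_order all_algebra.
From mathcomp Require Import finmap.
From mathcomp Require Import all_classical all_reals all_analysis.
Set Implicit Arguments. Unset Strict Implicit. Unset Printing Implicit Defensive.
Import Order.TTheory GRing.Theory Num.Theory.

Local Open Scope classical_set_scope.
Local Open Scope ring_scope.

Definition borel_of (G : ptopologicalType) := g_sigma_algebraType (@open G).

Definition topological_group (G : ptopologicalType)
    (mul : G -> G -> G) (inv : G -> G) (e : G) : Prop :=
  [/\ associative mul, left_id e mul, left_inverse e inv mul,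
      continuous (fun p : G * G => mul p.1 p.2) & continuous inv].

Definition compact_group (G : ptopologicalType)
    (mul : G -> G -> G) (inv : G -> G) (e : G) : Prop :=
  [/\ topological_group mul inv e, hausdorff_space G & compact [set: G]].

Definition non_discrete (G : ptopologicalType) : Prop :=
  ~ (forall A : set G, open A).

Definition normalized_haar (R : realType) (G : ptopologicalType)
    (mul : G -> G -> G) (nu : {measure set (borel_of G) -> \bar R}) : Prop :=
  [/\ nu [set: borel_of G] = 1%E,
      (forall (g : G) (A : set (borel_of G)), measurable A ->
          nu (mul g @` A) = nu A),
      (forall A : set (borel_of G), measurable A ->
          nu A = ereal_inf [set nu V | V in [set V : set G | open V /\ A `<=` V]])
    & (forall V : set G, open V ->
          nu V = ereal_sup [set nu K | K in [set K : set G | compact K /\ K `<=` V]])].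

Definition setmul (G : Type) (mul : G -> G -> G) (I U : set G) : set G :=
  [set mul i u | i in I & u in U].

(* Main.v *)
Require Import Defs.
From HB Require Import structures.
From mathcomp Require Import all_boot all_order all_algebra.
From mathcomp Require Import finmap.
From mathcomp Require Import all_classical all_reals all_analysis.
From mathcomp Require Import ring lra.
Import Order.TTheory GRing.Theory Num.Theory.
Set Implicit Arguments. Unset Strict Implicit. Unset Printing Implicit Defensive.

Local Open Scope ring_scope.

Section Comb.
Variable R : archiRealFieldType.
Variable J : finType.

Lemma sumD1_cond (S : {set J}) x (P : pred J) (g : J -> R) : x \in S ->
  \sum_(c in S | P c) g c = (if P x then g x else 0) + \sum_(c in S :\ x | P c) g c.
Proof.
move=> xS; rewrite big_mkcondr (bigD1 x) //=; congr (_ + _); rewrite [RHS]big_mkcondr.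
by apply: eq_bigl => c; rewrite in_setD1 andbC.
Qed.

Lemma transport_set (u : R) (par : J -> option J) (d : J -> nat) :
  0 < u -> (forall c j, par c = Some j -> (d j < d c)%N) ->
  forall (S : {set J}) (a : J -> R), (forall j, u <= a j) ->
  exists k : J -> nat, exists f : J -> R, forall j, j \in S ->
   [/\ 0 <= f j, f j < u &
     (k j)%:R * u = a j - f j + \sum_(c in S | par c == Some j) f c].
Proof.
move=> u0 hd S; move: {2}#|S| (leqnn #|S|) => n; elim: n S => [|n IH] S hS a ha.
  exists (fun _ => 0%N), (fun _ => 0) => j jS.
  by move: hS; rewrite leqn0 => /eqP/cards0_eq E; rewrite E inE in jS.
have [->|[x0 x0S]] := set_0Vmem S.
  by exists (fun _ => 0%N), (fun _ => 0) => j; rewrite inE.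
case: (@arg_maxnP J x0 (mem S) d x0S) => x xS xmax.
have {}xS : x \in S by [].
have {}xmax : forall y, y \in S -> (d y <= d x)%N by move=> y yS; apply: xmax.
set q := Num.truncn (a x / u).
have ax0 : 0 <= a x / u by rewrite divr_ge0 // (le_trans (ltW u0)).
have /andP[q1 q2] := truncn_itv ax0.
set fx := a x - q%:R * u.
have fx0 : 0 <= fx by rewrite subr_ge0 -ler_pdivlMr.
have fxu : fx < u.
  rewrite /fx ltrBlDr -[X in _ < X + _]mul1r -mulrDl addrC natr1 -ltr_pdivrMr //.
pose a' j := if par x == Some j then a j + fx else a j.
have ha' : forall j, u <= a' j.
  by move=> j; rewrite /a'; case: ifP => _ //; rewrite (le_trans (ha j)) // lerDl.
have hS' : (#|S :\ x| <= n)%N.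
  by move: hS; rewrite (cardsD1 x S) xS add1n ltnS.
have [k' [f' H']] := IH _ hS' a' ha'.
exists (fun j => if j == x then q else k' j), (fun j => if j == x then fx else f' j).
move=> j jS; case: (eqVneq j x) => [->|jx].
  split => //; rewrite big1 ?addr0.
    by rewrite /fx opprB addrC subrK.
  move=> c /andP[cS /eqP pc]; have := hd _ _ pc; have := xmax c cS.
  by move=> h1 h2; exfalso; move: (leq_ltn_trans h1 h2); rewrite ltnn.
have jS' : j \in S :\ x by rewrite in_setD1 jx.
have [h1 h2 h3] := H' j jS'; split => //.
rewrite (sumD1_cond _ _ xS) eqxx.
have -> : \sum_(c in S :\ x | par c == Some j) (if c == x then fx else f' c)
        = \sum_(c in S :\ x | par c == Some j) f' c.
  by apply: eq_bigr => c /andP[]; rewrite in_setD1 => /andP[/negPf -> _].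
rewrite h3 /a'; case: (par x == Some j).
  by ring.
by rewrite add0r.
Qed.


Lemma transport_ineq (u : R) (par : J -> option J) (a f : J -> R) (k cnt : J -> nat) :
  0 <= u -> (forall j, 0 <= f j <= a j) ->
  (forall j, (k j)%:R * u = a j - f j + \sum_(c | par c == Some j) f c) ->
  (forall j, (cnt j <= k j)%N) ->
  (\sum_j cnt j)%:R * u <=
    \sum_(i | (0 < cnt i)%N || (if par i is Some j then (0 < cnt j)%N else false)) a i.
Proof.
move=> u0 hf hk hc.
have step1 : (\sum_j cnt j)%:R * u <= \sum_j (if (0 < cnt j)%N then (k j)%:R * u else 0).
  rewrite natr_sum mulr_suml; apply: ler_sum => j _.
  case: (cnt j) (hc j) => [|m] h /=; first by rewrite mul0r.
  by rewrite ler_wpM2r // ler_nat.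
apply: (le_trans step1).
have -> : \sum_j (if (0 < cnt j)%N then (k j)%:R * u else 0) =
          \sum_j (if (0 < cnt j)%N then a j - f j else 0) +
          \sum_j (if (if par j is Some j' then (0 < cnt j')%N else false) then f j else 0).
  transitivity (\sum_j ((if (0 < cnt j)%N then a j - f j else 0) +
       \sum_c (if (0 < cnt j)%N && (par c == Some j) then f c else 0))).
    apply: eq_bigr => j _; rewrite hk; case: (0 < cnt j)%N => /=.
      by rewrite big_mkcond.
    by rewrite big1 ?addr0.
  rewrite big_split /=; congr (_ + _); rewrite exchange_big /=; apply: eq_bigr => c _.
  case: (par c) => [j0|]; last by rewrite big1 // => j _; rewrite andbF.
  rewrite (bigD1 j0) //= eqxx andbT big1 ?addr0 //.
  by move=> j /negPf jn /=; case: eqP => [H|]; rewrite ?andbF //; case: H => E; rewrite E eqxx in jn.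
rewrite [X in _ <= X]big_mkcond -big_split /=; apply: ler_sum => i _.
have /andP[hf0 hfa] := hf i.
case: (par i) => [j|] /=; case: (0 < cnt i)%N => /=; try case: (0 < cnt j)%N => /=; lra.
Qed.

Lemma sum_roots (u : R) (par : J -> option J) (a f : J -> R) (k : J -> nat) (rt : J -> J) r (n : nat) :
  0 < u -> (forall j, 0 <= f j < u) ->
  (forall j, (k j)%:R * u = a j - f j + \sum_(c | par c == Some j) f c) ->
  (forall c j, par c = Some j -> rt c = rt j) -> (forall j, par j = None -> rt j = j) ->
  par r = None -> \sum_(j | rt j == r) a j = n%:R * u -> f r = 0.
Proof.
move=> u0 hf hk hrt hroot pr hsum.
have E1 : \sum_(j | rt j == r) f j = f r + \sum_(c | (rt c == r) && (par c != None)) f c.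
  rewrite (bigD1 r) /=; last by rewrite hroot.
  congr (_ + _); apply: eq_bigl => c.
  case: (eqVneq c r) => [->|cr]; first by rewrite pr /= andbF.
  rewrite andbT; case E: (par c) => [j|] /=; first by rewrite andbT.
  by rewrite hroot // (negPf cr) andbF.
have E2 : \sum_(j | rt j == r) \sum_(c | par c == Some j) f c =
          \sum_(c | (rt c == r) && (par c != None)) f c.
  rewrite big_mkcond [RHS]big_mkcond /=.
  transitivity (\sum_c \sum_j (if (rt j == r) && (par c == Some j) then f c else 0)).
    rewrite exchange_big /=; apply: eq_bigr => j _.
    case: (rt j == r) => /=; last by rewrite big1.
    by rewrite big_mkcond.
  apply: eq_bigr => c _; case E: (par c) => [j0|] /=; last by rewrite andbF big1 // => j _; rewrite andbF.
  rewrite (bigD1 j0) //= eqxx andbT big1 ?addr0 ?(hrt _ _ E) ?andbT //.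
  by move=> j /negPf jn /=; case: (@eqP _ (Some j0) (Some j)) => [H|]; rewrite ?andbF //; case: H => E'; rewrite E' eqxx in jn.
have E3 : (\sum_(j | rt j == r) k j)%:R * u = n%:R * u - f r.
  rewrite natr_sum mulr_suml (eq_bigr _ (fun j _ => hk j)) big_split /= sumrB hsum E1 E2.
  by ring.
move: E3; set K := (\sum_(j | rt j == r) k j)%N => E3.
have [hf0 hfu] := andP (hf r).
have : f r = (n%:R - K%:R) * u by rewrite mulrBl E3; ring.
case: (ltngtP n K) => hnK.
- move=> E; exfalso.
  have : (n%:R - K%:R : R) <= -1.
    by rewrite lerBlDr addrC -lerBlDr opprK natr1 ler_nat.
  move=> h; have : f r <= - u by rewrite E; nra.
  lra.
- move=> E; exfalso.
  have : (1 : R) <= n%:R - K%:R by rewrite lerBrDr addrC natr1 ler_nat.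
  move=> h; have : u <= f r by rewrite E; nra.
  lra.
- by rewrite hnK subrr mul0r.
Qed.

Lemma sum_all (u : R) (par : J -> option J) (a f : J -> R) (k : J -> nat) :
  (forall j, (k j)%:R * u = a j - f j + \sum_(c | par c == Some j) f c) ->
  (forall j, par j = None -> f j = 0) ->
  (\sum_j k j)%:R * u = \sum_j a j.
Proof.
move=> hk h0.
rewrite natr_sum mulr_suml (eq_bigr _ (fun j _ => hk j)) big_split /= sumrB.
have -> : \sum_j \sum_(c | par c == Some j) f c = \sum_(c | par c != None) f c.
  rewrite [RHS]big_mkcond /=.
  transitivity (\sum_c \sum_j (if par c == Some j then f c else 0)).
    rewrite exchange_big /=; apply: eq_bigr => j _; by rewrite big_mkcond.
  apply: eq_bigr => c _; case E: (par c) => [j0|] /=; last by rewrite big1.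
  rewrite (bigD1 j0) //= eqxx big1 ?addr0 //.
  by move=> j /negPf jn /=; case: (@eqP _ (Some j0) (Some j)) => [H|] //; case: H => E'; rewrite E' eqxx in jn.
rewrite (bigID (fun c => par c != None) xpredT f) /=.
rewrite [\sum_(i | ~~ (par i != None)) f i]big1; first by rewrite addr0 subrK.
by move=> j; rewrite negbK => /eqP; apply: h0.
Qed.




Lemma spanning (adj : rel J) : symmetric adj ->
  exists par : J -> option J, exists d : J -> nat,
   (forall c j, par c = Some j -> adj c j /\ (d j < d c)%N) /\
   (forall j, par j = None -> fingraph.root adj j = j).
Proof.
move=> hsym; have cs := sym_connect_sym hsym.
pose P x n := [exists t : n.-tuple J, path adj (fingraph.root adj x) t && (last (fingraph.root adj x) t == x)].
have ex x : exists n, P x n.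
  have : connect adj (fingraph.root adj x) x by rewrite cs connect_root.
  case/connectP => p pp lp; exists (size p); apply/existsP; exists (in_tuple p).
  by rewrite pp /= -lp eqxx.
pose d x := ex_minn (ex x).
have key : forall x, x != fingraph.root adj x -> exists y, adj x y && (d y < d x)%N.
  move=> x xr; rewrite /d; case: ex_minnP => n /existsP[t /andP[pt lt]] minP.
  move: pt lt; case/lastP: (tval t) (size_tuple t) => [|q z] sz pt lt.
    by move: lt; rewrite /= eq_sym (negPf xr).
  move: lt; rewrite last_rcons => /eqP zx; subst z.
  move: pt; rewrite rcons_path => /andP[pq ay].
  set y := last (fingraph.root adj x) q in ay.
  have ryx : fingraph.root adj y = fingraph.root adj x.
    by apply/fingraph.rootP => //; rewrite cs; apply: connect1; rewrite hsym.
  exists y; rewrite hsym ay /=.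
  case: ex_minnP => m _ minPy.
  have Py : P y (size q).
    apply/existsP; exists (in_tuple q); rewrite ryx pq /=.
    by [].
  move: (minPy _ Py); rewrite size_rcons in sz; rewrite -sz.
  by move=> h; apply: (leq_ltn_trans h).
pose par x := if x == fingraph.root adj x then None else [pick y | adj x y && (d y < d x)%N].
exists par, d; split.
  move=> c j; rewrite /par; case: ifP => // _; case: pickP => // y /andP[h1 h2] [<-].
  by split.
move=> j; rewrite /par; case: ifP => [/eqP <-|/negbT jr]; first by [].
case: pickP => // h _; have [y hy] := key _ jr.
by move: (h y); rewrite hy.
Qed.

End Comb.


Local Open Scope classical_set_scope.
Local Open Scope ring_scope.

Section Grp.
Variables (G : ptopologicalType) (mul : G -> G -> G) (inv : G -> G) (e : G).
Hypotheses (mA : associative mul) (m1 : left_id e mul) (mV : left_inverse e inv mul).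

Lemma mulKg x y : mul (inv x) (mul x y) = y.
Proof. by rewrite mA mV m1. Qed.

Lemma mulgV x : mul x (inv x) = e.
Proof.
rewrite -[mul x _]m1 -{1}(mV (inv x)) -mA (mA (inv x)) mV m1.
by rewrite mV.
Qed.

Lemma mulg1 x : mul x e = x.
Proof. by rewrite -(mV x) mA mulgV m1. Qed.

Lemma mulKVg x y : mul x (mul (inv x) y) = y.
Proof. by rewrite mA mulgV m1. Qed.

Lemma invK x : inv (inv x) = x.
Proof. by rewrite -[inv (inv x)]mulg1 -(mV x) mA mV m1. Qed.

Lemma inv1 : inv e = e.
Proof. by rewrite -[inv e]mulg1 mV. Qed.

Lemma inv_uniq a b : mul a b = e -> inv a = b.
Proof. by move=> h; rewrite -(mulKg a b) h mulg1. Qed.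

Lemma invM x y : inv (mul x y) = mul (inv y) (inv x).
Proof. by apply: inv_uniq; rewrite -mA (mA y) mulgV m1 mulgV. Qed.

Hypotheses (cm : continuous (fun p : G * G => mul p.1 p.2)) (ci : continuous inv).

Lemma lmul_cont g : continuous (mul g).
Proof.
move=> x; apply: (@continuous_comp _ _ _ (fun x => (g, x)) (fun p : G * G => mul p.1 p.2)).
  by apply: cvg_pair => /=; [exact: cvg_cst|exact: cvg_id].
exact: cm.
Qed.

Definition tr g (A : set G) := mul g @` A.

Lemma trE g A : tr g A = mul (inv g) @^-1` A.
Proof.
apply/seteqP; split => x /=; first by case=> y Ay <-; rewrite mulKg.
by move=> Ax; exists (mul (inv g) x) => //; rewrite mulKVg.
Qed.

Lemma open_tr g A : open A -> open (tr g A).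
Proof. by rewrite trE; move/continuousP: (@lmul_cont (inv g)); apply. Qed.

Lemma nbhs_sq U : open U -> U e -> exists W : set G,
  [/\ open W, W e, (forall w, W w -> W (inv w)) & (forall a b, W a -> W b -> U (mul a b))].
Proof.
move=> oU Ue.
have hU : nbhs (mul (e, e).1 (e, e).2) U by rewrite /= m1; apply: open_nbhs_nbhs.
have := cm hU; case => -[A B] /= [nA nB] sAB.
have : nbhs e (A `&` B) by apply: filterI.
rewrite nbhsE => -[W0 [oW0 W0e] W0AB].
exists (W0 `&` inv @^-1` W0); split.
- by apply: openI => //; move/continuousP: ci; apply.
- by split => //=; rewrite inv1.
- by move=> w [h1 h2]; split => //=; rewrite invK.
move=> a b [Wa _] [Wb _]; have [Aa _] := W0AB _ Wa; have [_ Bb] := W0AB _ Wb.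
exact: (sAB (a, b)).
Qed.

Lemma closed_fset (hG : hausdorff_space G) (F : {fset G}) : closed [set` F].
Proof.
have cl1 : forall y : G, closed [set y] := accessible_closed_set1 (hausdorff_accessible hG).
rewrite (_ : [set` F] = \bigcup_(i in [set` F]) [set i]).
  by apply: closed_bigcup => //; exact: finite_fset.
apply/seteqP; split => y /=; first by move=> yF; exists y.
by case=> z zF ->.
Qed.

Lemma fresh (hG : hausdorff_space G) (nd : non_discrete G) (O : set G) x (F : {fset G}) :
  open O -> O x -> exists y, O y /\ y \notin F.
Proof.
move=> oO Ox; apply: contrapT => hn.
have hOF : forall y, O y -> y \in F.
  move=> y Oy; apply: contrapT => yF; apply: hn; exists y; split => //; exact/negP.
have ox : open [set x].
  rewrite (_ : [set x] = O `&` ~` [set` (F `\ x)%fset]).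
    by apply: openI => //; rewrite openC; exact: closed_fset.
  apply/seteqP; split => y /=.
    by move=> ->; split => //; rewrite /= !inE eqxx.
  case=> Oy; rewrite /= !inE (hOF _ Oy) andbT => /negP; rewrite negbK => /eqP.
  by [].
apply: nd => A.
rewrite (_ : A = \bigcup_(a in A) tr (mul a (inv x)) [set x]).
  by apply: bigcup_open => a _; exact: open_tr.
apply/seteqP; split => y /=.
  by move=> Ay; exists y => //; exists x => //; rewrite -mA mV mulg1.
by case=> a Aa [z /= zx <-]; subst z; rewrite -mA mV mulg1.
Qed.

Fixpoint Wn (W : set G) n : set G :=
  if n is n'.+1 then [set x | exists w y, W w /\ Wn W n' y /\ x = mul w y]
  else [set x | x = e].

Lemma Wn_mul W n m x y : Wn W n x -> Wn W m y -> Wn W (n + m) (mul x y).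
Proof.
elim: n x => [|n IH] x; first by rewrite /= => -> ?; rewrite m1.
rewrite addSn => /= -[w [x' [Ww [hx' ->]]]] hy.
by exists w, (mul x' y); split => //; split; [exact: IH | rewrite mA].
Qed.

Lemma Wn1 W w : W w -> Wn W 1 w.
Proof. by move=> Ww; exists w, e; split => //; split => //; rewrite mulg1. Qed.

Lemma Wn_inv W (hs : forall w, W w -> W (inv w)) n x : Wn W n x -> Wn W n (inv x).
Proof.
elim: n x => [|n IH] x; first by rewrite /= => ->; rewrite inv1.
move=> [w [x' [Ww [hx' ->]]]]; rewrite invM -addn1.
by apply: Wn_mul; [exact: IH | exact: Wn1 (hs _ Ww)].
Qed.

Lemma Wn_pad W (We : W e) n x : Wn W n x -> Wn W n.+1 x.
Proof. by move=> h; exists e, x; split => //; split => //; rewrite m1. Qed.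

Lemma Wn_le W (We : W e) n m x : (n <= m)%N -> Wn W n x -> Wn W m x.
Proof.
move=> /subnKC <-; elim: (m - n)%N => [|k IH]; first by rewrite addn0.
by move=> h; rewrite addnS; apply: Wn_pad => //; exact: IH.
Qed.

Lemma Wn_half W V (hWV : forall a b, W a -> W b -> V (mul a b)) n x :
  Wn W (n.*2) x -> Wn V n x.
Proof.
elim: n x => [|n IH] x; first by [].
rewrite doubleS => /= -[w1 [y1 [Ww1 [[w2 [y [Ww2 [hy ->]]]] ->]]]].
by exists (mul w1 w2), y; split; [exact: hWV | split; [exact: IH | rewrite mA]].
Qed.

Lemma bigsetU_ordP n (P : pred 'I_n) (F : 'I_n -> set G) x :
  (\big[setU/set0]_(i < n | P i) F i) x <-> exists i, P i /\ F i x.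
Proof.
rewrite -bigcup_seq_cond; split.
  by case=> i /= /andP[_ Pi] Fi; exists i.
by case=> i [Pi Fi]; exists i => //=; rewrite mem_index_enum.
Qed.

Lemma open_Wn2 W : open W -> open (Wn W 2).
Proof.
move=> oW; rewrite (_ : Wn W 2 = \bigcup_(w in W) tr w W).
  by apply: bigcup_open => w _; exact: open_tr.
apply/seteqP; split => x /=.
  case=> w1 [y [Ww1 [[w2 [y' [Ww2 [-> ->]]]] ->]]].
  by exists w1 => //; exists w2 => //; rewrite mulg1.
by case=> w1 Ww1 [w2 Ww2 <-]; exists w1, (mul w2 e); split => //; split; [by exists w2, e | by rewrite mulg1].
Qed.

Variables (W U : set G).
Hypotheses (oW : open W) (We : W e) (Wsym : forall w, W w -> W (inv w))
  (hWU : forall x, Wn W 8 x -> U x).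
Variables (s : nat) (g : 'I_s -> G).
Hypotheses (hdisj : forall i j, i != j -> tr (g i) W `&` tr (g j) W = set0)
  (hmax : forall x, exists j, tr x W `&` tr (g j) W !=set0).

Definition Y := Wn W 2.
Definition ball j := tr (g j) W.
Definition Yb j := tr (g j) Y.
Definition Cj (j : 'I_s) := \bigcup_(i in [set i : 'I_s | (i < j)%N]) Yb i `|` \bigcup_(i in [set: 'I_s]) ball i.
Definition B j := ball j `|` (Yb j `\` Cj j).

Lemma W_Y w : W w -> Y w.
Proof. by move=> Ww; apply: Wn_pad => //; exact: Wn1. Qed.

Lemma ball_B j : ball j `<=` B j.
Proof. by move=> x bx; left. Qed.

Lemma B_Yb j : B j `<=` Yb j.
Proof. by move=> x [[w Ww <-]|[]] //; exists w => //; exact: W_Y. Qed.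

Lemma g_B j : B j (g j).
Proof. by apply: ball_B; exists e => //; rewrite mulg1. Qed.

Lemma open_Y : open Y. Proof. exact: open_Wn2. Qed.

Lemma B_disj i j : i != j -> B i `&` B j = set0.
Proof.
move=> ij; apply/seteqP; split => // x [Bi Bj].
have bi : forall k, ball k x -> ~ (Yb j x /\ ~ Cj j x).
  by move=> k bk [_ hC]; apply: hC; right; exists k.
have bi' : forall k, ball k x -> ~ (Yb i x /\ ~ Cj i x).
  by move=> k bk [_ hC]; apply: hC; right; exists k.
case: Bi => [bix|Yi]; case: Bj => [bjx|Yj].
- by rewrite -(hdisj ij); split.
- by case: (bi i bix).
- by case: (bi' j bjx).
case: Yi => Yi Ci; case: Yj => Yj Cj'.
case: (ltngtP i j) => h.
- by apply: Cj'; left; exists i.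
- by apply: Ci; left; exists j.
- by move: ij; rewrite (val_inj h) eqxx.
Qed.

Lemma B_cover x : exists j, B j x.
Proof.
case: (pselect (exists j, ball j x)) => [[j bj]|nb]; first by exists j; left.
have ex : exists n, `[< exists j : 'I_s, nat_of_ord j = n /\ Yb j x >].
  have [j [y [[w Ww xw] [w' Ww' gw]]]] := hmax x.
  exists j; apply/asboolP; exists j; split => //.
  exists (mul w' (inv w)); last by rewrite mA gw -xw -mA mulgV mulg1.
  rewrite /Y; exists w', (mul (inv w) e); split => //; split; last by rewrite mulg1.
  by exists (inv w), e; split; [exact: Wsym|].
case: (ex_minnP ex) => n /asboolP [j [jn Yj]] hmin.
exists j; right; split => //; case => [[i /= ij Yi]|[i _ bi]].
  have := hmin i; rewrite -jn leqNgt ij => h; exfalso; apply: notF; apply: h; apply/asboolP; by exists i.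
by apply: nb; exists i.
Qed.

Definition adj : rel 'I_s := fun i j => `[< Wn W 5 (mul (inv (g i)) (g j)) >].

Lemma adj_sym : symmetric adj.
Proof.
by move=> i j; apply/asboolP/asboolP => h; have := Wn_inv Wsym h; rewrite invM invK.
Qed.

Lemma adj_refl j : adj j j.
Proof. by apply/asboolP; rewrite mV; apply: (@Wn_le W We 0). Qed.

Lemma B_ex j a : B j a -> exists y, Y y /\ a = mul (g j) y.
Proof. by move=> /B_Yb [y Yy <-]; exists y. Qed.

Lemma adj_step j i a w : B j a -> W w -> B i (mul a w) -> adj j i.
Proof.
move=> /B_ex [y1 [Y1 ->]] Ww /B_ex [y2 [Y2 h]]; apply/asboolP.
have gi : g i = mul (mul (mul (g j) y1) w) (inv y2) by rewrite h -mA mulgV mulg1.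
rewrite gi -!mA mulKg.
apply: (@Wn_mul _ 2 3) => //; apply: (@Wn_mul _ 1 2); [exact: Wn1 | exact: Wn_inv].
Qed.

Definition grel x y := exists n, Wn W n (mul (inv x) y).

Lemma grel_trans x y z : grel x y -> grel y z -> grel x z.
Proof.
by move=> [n h1] [m h2]; exists (n + m); have := Wn_mul h1 h2; rewrite -mA mulKVg.
Qed.

Lemma grel_adj j i a b : adj j i -> B j a -> B i b -> grel a b.
Proof.
move=> /asboolP hji /B_ex [y1 [Y1 ->]] /B_ex [y2 [Y2 ->]].
exists (2 + (5 + 2))%N; rewrite invM -mA (mA (inv (g j))).
by apply: Wn_mul; [exact: Wn_inv | exact: Wn_mul].
Qed.

Lemma B_subU j c h : adj c j -> ball j h -> B c `<=` tr h U.
Proof.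
move=> /asboolP hcj [w0 Ww0 <-] x /B_ex [y [Yy ->]].
exists (mul (inv (mul (g j) w0)) (mul (g c) y)); last by rewrite mulKVg.
apply: hWU; rewrite invM -mA (mA (inv (g j))).
have hjc : Wn W 5 (mul (inv (g j)) (g c)) by have := Wn_inv Wsym hcj; rewrite invM invK.
by apply: (@Wn_mul _ 1 7); [apply: Wn1; exact: Wsym | exact: (@Wn_mul _ 5 2)].
Qed.

Definition rt := fingraph.root adj.
Definition A r := \big[setU/set0]_(j < s | rt j == r) B j.

Lemma AP r x : A r x <-> exists j, rt j == r /\ B j x.
Proof. exact: bigsetU_ordP. Qed.

Let cs := sym_connect_sym adj_sym.

Lemma rt_adj j i : adj j i -> rt i = rt j.
Proof. by move=> h; apply/esym/(fingraph.rootP cs); exact: connect1. Qed.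

Lemma A_closed r a w : A r a -> W w -> A r (mul a w).
Proof.
move=> /AP [j [rj Bj]] Ww; have [i Bi] := B_cover (mul a w).
by apply/AP; exists i; split => //; rewrite (rt_adj (adj_step Bj Ww Bi)).
Qed.

Lemma A_grel1 r a x : A r a -> grel a x -> A r x.
Proof.
move=> Aa [n]; elim: n a Aa => [|n IH] a Aa.
  by move=> /= h; have -> : x = a by rewrite -(mulKVg a x) h mulg1.
case=> w [y [Ww [hy hxy]]]; apply: (IH (mul a w)); first exact: A_closed.
by rewrite invM -mA hxy mulKg.
Qed.

Lemma conn_grel j i a b : connect adj j i -> B j a -> B i b -> grel a b.
Proof.
move=> /connectP [p pp ->]; elim: p j a pp => [|z p IH] j a /= pp Ba Bb.
  exact: grel_adj (adj_refl j) Ba Bb.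
case/andP: pp => ajz pz.
exact: grel_trans (grel_adj ajz Ba (g_B z)) (IH _ _ pz (g_B z) Bb).
Qed.

Lemma A_grel2 r a b : A r a -> A r b -> grel a b.
Proof.
move=> /AP [j [/eqP rj Ba]] /AP [i [/eqP ri Bb]]; apply: conn_grel Ba Bb.
by apply/(fingraph.rootP cs); rewrite -/rt rj ri.
Qed.

Lemma A_g r : rt r = r -> A r (g r).
Proof. by move=> h; apply/AP; exists r; split; [exact/eqP | exact: g_B]. Qed.

Lemma A_tr r r' : rt r = r -> rt r' = r' -> A r' = tr (mul (g r') (inv (g r))) (A r).
Proof.
move=> hr hr'; have Ar := A_g hr; have Ar' := A_g hr'.
rewrite trE; apply/seteqP; split => x /=.
  move=> Ax; apply: (A_grel1 Ar); have [n h] := A_grel2 Ar' Ax.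
  by exists n; rewrite invM invK -mA mulKg.
move=> Ax; apply: (A_grel1 Ar'); have [n h] := A_grel2 Ar Ax.
by exists n; move: h; rewrite invM invK -mA mulKg.
Qed.

Variable R : realType.
Variable nu : {measure set (borel_of G) -> \bar R}.
Hypotheses (nu1 : nu setT = 1%E)
  (nuinv : forall (x : G) (A : set (borel_of G)), measurable A -> nu (mul x @` A) = nu A).

Lemma open_meas (A : set G) : open A -> measurable (A : set (borel_of G)).
Proof. by move=> oA; apply: sub_sigma_algebra. Qed.

Lemma nu_fin (A : set (borel_of G)) : measurable A -> nu A \is a fin_num.
Proof.
move=> mA'; rewrite ge0_fin_numE //.
have : (nu A <= nu setT)%E.
  by apply: le_measure => //; rewrite inE //; exact: measurableT.
by rewrite nu1 => h; apply: (le_lt_trans h); rewrite ltey.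
Qed.

Lemma nuE (A : set (borel_of G)) : measurable A -> nu A = (fine (nu A))%:E.
Proof. by move=> h; rewrite fineK // nu_fin. Qed.

Lemma B_meas j : measurable (B j : set (borel_of G)).
Proof.
apply: measurableU; first by apply: open_meas; exact: open_tr.
apply: measurableD; first by apply: open_meas; apply: open_tr; exact: open_Y.
apply: open_meas; apply: openU; apply: bigcup_open => i _; apply: open_tr => //.
exact: open_Y.
Qed.

Definition a j := fine (nu (B j)).
Definition beta := fine (nu W).

Lemma triv_B (P : pred 'I_s) : trivIset (fun i => P i) B.
Proof.
move=> i j _ _ [x Bx]; apply/eqP/negPn/negP => ij.
by move: Bx; rewrite (B_disj ij).
Qed.

Lemma sum_a : \sum_j a j = 1.
Proof.
have h := @measure_bigsetU_ord_cond _ _ _ nu s xpredT B (fun j _ => B_meas j) (@triv_B xpredT).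
have E : \big[setU/set0]_(j < s | xpredT j) B j = (setT : set (borel_of G)).
  apply/seteqP; split => // x _; apply/bigsetU_ordP; have [j Bj] := B_cover x.
  by exists j.
move: h; rewrite E => h.
apply: EFin_inj; rewrite -sumEFin.
rewrite -(eq_bigr _ (fun j _ => nuE (B_meas j))) -h; exact: nu1.
Qed.

Lemma a_ge j : beta <= a j.
Proof.
have mW := open_meas oW.
have : (nu W <= nu (B j))%E.
  rewrite -(nuinv (g j) mW); apply: le_measure; rewrite ?inE //.
    exact: (open_meas (open_tr (g j) oW)).
  exact: B_meas.
  exact: ball_B.
by rewrite (nuE mW) (nuE (B_meas j)) lee_fin.
Qed.

Lemma A_meas r : measurable (A r : set (borel_of G)).
Proof. by apply: bigsetU_measurable => j _; exact: B_meas. Qed.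

Lemma sumA r : nu (A r) = (\sum_(j | rt j == r) a j)%:E.
Proof.
rewrite /A measure_bigsetU_ord_cond //; last first.
  exact: triv_B.
  by move=> j _; exact: B_meas.
by rewrite -sumEFin; apply: eq_bigr => j _; exact: (nuE (B_meas j)).
Qed.

Lemma sumA_eq r r' : rt r = r -> rt r' = r' ->
  \sum_(j | rt j == r') a j = \sum_(j | rt j == r) a j.
Proof.
move=> hr hr'; apply: EFin_inj; rewrite -!sumA (A_tr hr hr').
by rewrite nuinv //; exact: A_meas.
Qed.

Lemma nuW_pos (cG : compact [set: G]) : 0 < beta.
Proof.
have mW := open_meas oW.
have cov : [set: G] `<=` cover [set: G] (fun x => tr x W).
  by move=> x _; exists x => //; exists e => //; rewrite mulg1.
move: cG; rewrite compact_cover => cG.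
have [D' _ hD'] := cG G setT (fun x => tr x W) (fun x _ => open_tr x oW) cov.
have h : (nu (setT : set (borel_of G)) <= \sum_(i \in [set` D']) nu (tr i W))%E.
  apply: (content_sub_fsum _ (finite_fset D')) => //.
  by move=> i _; apply: open_meas; exact: open_tr.
have hb : 0 <= beta by rewrite /beta fine_ge0.
rewrite lt_def hb andbT; apply/eqP => b0.
have nW0 : nu W = 0%E by rewrite (nuE mW) -/beta b0.
move: h; rewrite fsbig1; last by move=> i _; rewrite nuinv.
by rewrite nu1 lee_fin ler10.
Qed.

Lemma pts (hG : hausdorff_space G) (nd : non_discrete G) (O : set G) x k :
  open O -> O x -> exists F : {fset G}, #|` F| = k /\ forall y, y \in F -> O y.
Proof.
move=> oO Ox; elim: k => [|k [F [cF hF]]].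
  by exists fset0; split; [rewrite cardfs0 | move=> y; rewrite inE].
have [y [Oy yF]] := fresh hG nd F oO Ox.
exists (y |` F)%fset; split; first by rewrite cardfsU1 yF cF.
by move=> z /fset1UP [->|/hF].
Qed.

Lemma card_cup (Fs : 'I_s -> {fset G}) (I : {fset G}) (r : seq 'I_s) :
  (forall i j, i != j -> (Fs i `&` Fs j)%fset = fset0) -> uniq r ->
  #|` (I `&` \big[@fsetU _/fset0]_(j <- r) Fs j)%fset| = (\sum_(j <- r) #|` (I `&` Fs j)%fset|)%N.
Proof.
move=> hF; elim: r => [|j r IH] /=.
  by rewrite !big_nil fsetI0 cardfs0.
case/andP => jr ur; rewrite !big_cons fsetIUr cardfsU IH //.
rewrite (_ : ((I `&` Fs j) `&` (I `&` \big[@fsetU _/fset0]_(j0 <- r) Fs j0))%fset = fset0).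
  by rewrite cardfs0 subn0.
apply/eqP; rewrite -fsubset0; apply/fsubsetP => x; rewrite !inE => /andP[/andP[_ xj] /andP[_]].
case/bigfcupP => i /andP[ir _] xi.
have ij : i != j by apply: contraNneq jr => <-.
by move: (hF _ _ ij) => /eqP; rewrite -fsubset0 => /fsubsetP/(_ x); rewrite !inE xi xj => /(_ isT).
Qed.

Lemma setmul_open (I : {fset G}) : open U -> open (setmul mul [set` I] U).
Proof.
move=> oU; rewrite (_ : setmul _ _ _ = \bigcup_(h in [set` I]) tr h U).
  by apply: bigcup_open => h _; exact: open_tr.
apply/seteqP; split => x /=.
  by case=> h hI [y Uy <-]; exists h => //; exists y.
by case=> h hI [y Uy <-]; exists h => //; exists y.
Qed.

Lemma final (cG : compact [set: G]) (hG : hausdorff_space G) (nd : non_discrete G)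
  (oU : open U) :
  exists H : {fset G}, setmul mul [set` H] U = [set: G] /\
    (forall I : {fset G}, (I `<=` H)%fset ->
       ((#|` I|%:R / #|` H|%:R)%:E <= nu (setmul mul [set` I] U))%E).
Proof.
have bpos := nuW_pos cG.
have [j0 _] := B_cover e.
pose r0 := rt j0.
have hr0 : rt r0 = r0 by rewrite /r0 /rt (fingraph.root_root cs).
pose al := \sum_(j | rt j == r0) a j.
have a0 : forall j, 0 <= a j := fun j => le_trans (ltW bpos) (a_ge j).
have alpos : 0 < al.
  rewrite /al (bigD1 r0) /=; last by rewrite hr0.
  apply: (lt_le_trans bpos); rewrite (le_trans (a_ge r0)) // lerDl.
  by apply: sumr_ge0 => j _.
pose n := (Num.truncn (al / beta)).+1.
pose u := al / n%:R.
have n0 : (0 < n%:R :> R) by rewrite ltr0n.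
have u0 : 0 < u by rewrite divr_gt0.
have ub : u <= beta.
  have h : al / beta < n%:R.
    by have /andP[_ h] := truncn_itv (ltW (divr_gt0 alpos bpos)).
  rewrite /u ler_pdivrMr //; move: h; rewrite ltr_pdivrMr // => /ltW.
  by rewrite mulrC.
have ua : forall j, u <= a j := fun j => le_trans ub (a_ge j).
have [par [d [hpar hnone]]] := spanning adj_sym.
have [k [f hkf]] := @transport_set R _ u par d u0 (fun c j h => (hpar c j h).2) [set: 'I_s]%SET a ua.
have hkf' : forall j, [/\ 0 <= f j, f j < u &
    (k j)%:R * u = a j - f j + \sum_(c | par c == Some j) f c].
  move=> j; have [h1 h2 h3] := hkf j (finset.in_setT j); split => //; rewrite h3.
  by congr (_ + _); apply: eq_bigl => c; rewrite finset.in_setT.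
have hk j : (k j)%:R * u = a j - f j + \sum_(c | par c == Some j) f c.
  by case: (hkf' j).
have hf j : 0 <= f j < u by case: (hkf' j) => h1 h2 _; rewrite h1 h2.
have hroots : forall r, par r = None -> f r = 0.
  move=> r pr; apply: (@sum_roots R _ u par a f k rt r n) => //.
  - by move=> c j /hpar [h _]; rewrite (rt_adj h).
  - have hr := hnone r pr; rewrite (sumA_eq hr0 hr) -/al /u mulrC divfK //.
    by rewrite gt_eqF.
have hsum := sum_all hk hroots; rewrite sum_a in hsum.
have [Fs hFs] : exists Fs : 'I_s -> {fset G}, forall j, #|` Fs j| = k j /\
    forall y, y \in Fs j -> ball j y.
  apply: (@fin_all_exists _ (fun _ => {fset G}) (fun j F => #|` F| = k j /\ forall y, y \in F -> ball j y)) => j.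
  have bj : ball j (g j) by exists e => //; rewrite mulg1.
  exact: (@pts hG nd (ball j) (g j) (k j) (open_tr (g j) oW) bj).
have Fdisj : forall i j, i != j -> (Fs i `&` Fs j)%fset = fset0.
  move=> i j ij; apply/eqP; rewrite -fsubset0; apply/fsubsetP => x; rewrite !inE => /andP[xi xj].
  have : (tr (g i) W `&` tr (g j) W) x by split; [apply: (hFs i).2 | apply: (hFs j).2].
  by rewrite hdisj.
pose H := \big[@fsetU _/fset0]_(j < s) Fs j.
have cardI : forall I, #|` (I `&` H)%fset| = (\sum_j #|` (I `&` Fs j)%fset|)%N.
  by move=> I; apply: card_cup => //; exact: index_enum_uniq.
have inH : forall j y, y \in Fs j -> y \in H.
  by move=> j y yj; apply/bigfcupP; exists j => //; rewrite mem_index_enum.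
have cardH : #|` H| = (\sum_j k j)%N.
  rewrite -[X in #|` X|]fsetIid cardI; apply: eq_bigr => j _.
  rewrite (fsetIidPr _) ?(hFs j).1 //; apply/fsubsetP => y; exact: inH.
have kpos : forall j, (0 < k j)%N.
  move=> j; rewrite lt0n; apply/eqP => kj.
  have h3 := hk j; rewrite kj mul0r in h3.
  have h4 : 0 <= \sum_(c | par c == Some j) f c by apply: sumr_ge0 => c _; case/andP: (hf c).
  have h5 := ua j; have /andP[_ h6] := hf j.
  lra.
have nonempty : forall (X : {fset G}), (0 < #|` X|)%N -> exists h, h \in X.
  by move=> X; rewrite cardfs_gt0 => /fset0Pn.
exists H; split.
  apply/seteqP; split => // x _; have [j Bj] := B_cover x.
  have [h hj] : exists h, h \in Fs j by apply: nonempty; rewrite (hFs j).1 kpos.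
  have [y Uy hy] := B_subU (adj_refl j) ((hFs j).2 _ hj) Bj.
  by exists h; [exact: inH hj | exists y].
move=> I IH.
pose cnt j := #|` (I `&` Fs j)%fset|.
have cI : #|` I| = (\sum_j cnt j)%N.
  by rewrite -cardI; congr #|` _|; apply/esym/fsetIidPl.
have ck : forall j, (cnt j <= k j)%N.
  by move=> j; rewrite -(hFs j).1; apply: fsubset_leq_card; apply: fsubsetIr.
have hfa : forall j, 0 <= f j <= a j.
  by move=> j; have /andP[h1 h2] := hf j; rewrite h1 /= (le_trans (ltW h2) (ua j)).
have ineq := transport_ineq (ltW u0) hfa hk ck.
have K0 : (\sum_j k j)%:R != (0 : R).
  rewrite pnatr_eq0 -lt0n; apply: (leq_trans (kpos j0)).
  by rewrite (bigD1 j0) //= leq_addr.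
have uH : u = 1 / (#|` H|)%:R by rewrite cardH; apply: (mulIf K0); rewrite mulrC hsum mul1r mulVf.
set T := (fun i => (0 < cnt i)%N || (if par i is Some j then (0 < cnt j)%N else false)).
have mIU : measurable (setmul mul [set` I] U : set (borel_of G)).
  by apply: open_meas; exact: setmul_open.
have sub : \big[setU/set0]_(i < s | T i) B i `<=` setmul mul [set` I] U.
  move=> x /bigsetU_ordP [i [Ti Bi]].
  have key : forall j h, adj i j -> h \in (I `&` Fs j)%fset -> setmul mul [set` I] U x.
    move=> j h aij; rewrite inE => /andP[hI hj].
    have [y Uy hy] := B_subU aij ((hFs j).2 _ hj) Bi.
    by exists h => //; exists y.
  case/orP: Ti => [c0|].
    have [h hh] := nonempty _ c0; exact: (key i h (adj_refl i) hh).
  case E: (par i) => [j|] // cj.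
  have [h hh] := nonempty _ cj; exact: (key j h (hpar _ _ E).1 hh).
apply: (@le_trans _ _ (\sum_(i | T i) a i)%:E).
  by rewrite lee_fin cI; move: ineq; rewrite uH mul1r.
have -> : (\sum_(i | T i) a i)%:E = nu (\big[setU/set0]_(i < s | T i) B i).
  rewrite measure_bigsetU_ord_cond //; last first.
    exact: triv_B.
    by move=> j _; exact: B_meas.
  by rewrite -sumEFin; apply: eq_bigr => j _; exact/esym/(nuE (B_meas j)).
apply: le_measure => //; rewrite inE //.
by apply: bigsetU_measurable => j _; exact: B_meas.
Qed.


Lemma packing (cG : compact [set: G]) : exists s (g : 'I_s -> G),
  (forall i j, i != j -> tr (g i) W `&` tr (g j) W = set0) /\
  (forall x, exists j, tr x W `&` tr (g j) W !=set0).
Proof.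
have bpos := nuW_pos cG.
have mW := open_meas oW.
pose P n := `[< exists g : nat -> G, forall i j, (i < n)%N -> (j < n)%N -> i != j ->
   tr (g i) W `&` tr (g j) W = set0 >].
have P0 : P 0%N by apply/asboolP; exists (fun _ => e).
have bnd : forall n, P n -> (n <= Num.truncn (1 / beta))%N.
  move=> n /asboolP [gg hg].
  rewrite truncn_ge_nat; last by rewrite divr_ge0 // ltW.
  rewrite ler_pdivlMr //.
  pose F (i : 'I_n) := tr (gg i) W.
  have tF : trivIset (fun i => xpredT i) F.
    move=> i j _ _ [x Fx]; apply/eqP/negPn/negP => ij.
    have ij' : (nat_of_ord i != nat_of_ord j) by [].
    by move: Fx; rewrite /F (hg _ _ (ltn_ord i) (ltn_ord j) ij').
  have h := @measure_bigsetU_ord_cond _ _ _ nu n xpredT F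
     (fun i _ => open_meas (open_tr (gg i) oW)) tF.
  have : (nu (\big[setU/set0]_(i < n | xpredT i) F i) <= nu setT)%E.
    apply: le_measure; rewrite ?inE //.
    by apply: bigsetU_measurable => i _; exact: open_meas (open_tr (gg i) oW).
  rewrite h nu1 (eq_bigr (fun _ => (beta)%:E)); last first.
    by move=> i _; rewrite /beta -(nuE mW) -(nuinv (gg i) mW).
  by rewrite sumEFin lee_fin sumr_const card_ord mulr_natl.
have [sm /asboolP [gg hg] smax] := ex_maxnP (ex_intro _ 0%N P0) bnd.
exists sm, (fun i => gg i); split.
  by move=> i j ij; apply: hg => //.
move=> x; apply: contrapT => hn.
have hx : forall j : 'I_sm, tr x W `&` tr (gg j) W = set0.
  move=> j; apply/seteqP; split => // y hy; apply: hn; exists j; by exists y.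
have : P sm.+1.
  apply/asboolP; exists (fun n => if (n < sm)%N then gg n else x) => i j.
  rewrite !ltnS => ile jle ij.
  case: (ltnP i sm) => ilt; case: (ltnP j sm) => jlt.
  - by apply: hg.
  - by rewrite setIC (hx (Ordinal ilt)).
  - by rewrite (hx (Ordinal jlt)).
  - have ei : i = sm by apply/eqP; rewrite eqn_leq ile ilt.
    have ej : j = sm by apply/eqP; rewrite eqn_leq jle jlt.
    by move: ij; rewrite ei ej eqxx.
by move/smax; rewrite ltnn.
Qed.

End Grp.

Local Open Scope classical_set_scope.
Local Open Scope ring_scope.
Local Open Scope fset_scope.

Theorem lemma3 (R : realType) (G : ptopologicalType)
    (mul : G -> G -> G) (inv : G -> G) (e : G)
    (nu : {measure set (borel_of G) -> \bar R}) :
  compact_group mul inv e -> non_discrete G -> normalized_haar mul nu ->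
  forall U : set G, open U -> U e ->
  exists H : {fset G},
    setmul mul [set` H] U = [set: G] /\
    (forall I : {fset G}, I `<=` H ->
       ((#|` I|%:R / #|` H|%:R)%:E <= nu (setmul mul [set` I] U))%E).
Proof.
case=> [[mA m1 mV cm ci] hG cG] nd [nu1 nuinv _ _] U oU Ue.
have [W1 [oW1 W1e W1s W1U]] := nbhs_sq mA m1 mV cm ci oU Ue.
have [W2 [oW2 W2e W2s W2U]] := nbhs_sq mA m1 mV cm ci oW1 W1e.
have [W3 [oW3 W3e W3s W3U]] := nbhs_sq mA m1 mV cm ci oW2 W2e.
have hWU : forall x, Wn mul e W3 8 x -> U x.
  move=> x h.
  have h2 := @Wn_half _ _ _ mA _ _ W3U 4 x h.
  have h1 := @Wn_half _ _ _ mA _ _ W2U 2 x h2.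
  have h0 := @Wn_half _ _ _ mA _ _ W1U 1 x h1.
  by case: h0 => w [y [Uw [-> ->]]]; rewrite (mulg1 mA m1 mV).
have [s [g [hd hm]]] := packing mA m1 mV cm oW3 W3e nu1 nuinv cG.
exact: (final mA m1 mV cm oW3 W3e W3s hWU hd hm nu1 nuinv cG hG nd oU).
Qed.
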